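(* For every instance, $H^{PW''}\le \tfrac{32000}{16947}H^*$ (note $\tfrac{32000}{16947}\approx 1.888$). That is, the approximation ratio of algorithm PW'' never exceeds $\tfrac{32000}{16947}$.
   Context: An instance consists of an integer $n\ge 1$ and growth rates $1=h(1)\ge h(2)\ge\cdots\ge h(n)>0$ of bamboos $b_1,\dots,b_n$. Bamboo Garden Trimming (discrete version): - All heights are $0$ initially. - On each day $t=1,2,\dots$ every bamboo $b_j$ grows by $h(j)$. - At the end of each day the gardener cuts exactly one bamboo $\sigma(t)\in\{1,\dots,n\}$ back to height $0$. The height of a schedule $\sigma:\mathbb{N}\to\{1,\dots,n\}$ is the supremum, over all days $t$ and all $j$, of the height of $b_j$ at the end of day $t$ just before the cut. $H^*$ denotes the infimum of this height over all schedules. Value of algorithm PW'': - Split $\{1,\dots,n\}$ into four sets: - $S_1=\{j: \tfrac23<h(j)\le 1\}$; - $S_2=\{j:\tfrac12<h(j)\le\tfrac23\}$; - $S_3=\{j: h(j)\le\tfrac12 \text{ and } \tfrac23 2^{-k}<h(j)\le 2^{-k}\text{ for some integer }k\ge1\}$; - $S_4=\{j: h(j)\le\tfrac12\text{ and } 2^{-(k+1)}<h(j)\le \tfrac23 2^{-k}\text{ for some integer }k\ge 1\}$. - Modified growths: $h''(j)=2^{-k}$ for $j\in S_3$ and $h''(j)=\tfrac23 2^{-k}$ for $j\in S_4$, with $k$ as in the definition of the set. - Let $\pi_1=|S_1|$, $sh_3=\sum_{j\in S_3}h''(j)$, $sh_4=\sum_{j\in S_4}h''(j)$, $\pi_3=\lfloor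 sh_3\rfloor$, $\pi_4=\lfloor sh_4\rfloor$, $f_3=sh_3-\pi_3$, $f_4=sh_4-\pi_4$. - Option (a): $\pi_R(a)=\lceil f_3+f_4\rceil$ and $z(a)=\pi_1+|S_2|+\pi_3+\pi_4+\pi_R(a)$. - Option (b): if $S_2=\emptyset$ put $z(b)=+\infty$. Otherwise let $h^*=\max_{j\in S_2}h(j)$ and $f_2=\tfrac12$ if $|S_2|$ is odd, $f_2=0$ if $|S_2|$ is even. Then $\pi_R(b)=\lceil f_2+f_3+f_4\rceil$ and $z(b)=2h^*\,(\pi_1+\lfloor |S_2|/2\rfloor+\pi_3+\pi_4+\pi_R(b))$. - The value returned by algorithm PW'' is $H^{PW''}=\min\{z(a),z(b)\}$. The paper takes this as the maximum height of the periodic pinwheel trimming schedule that it builds from these partitions. *)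

(* Defs.v *)
From Stdlib Require Import Reals Lra Lia List Arith ZArith.
Open Scope R_scope.

(** Bamboos are indexed 1..n, days are 1,2,...; a schedule is sigma : nat -> nat
    (value on day t = index of the bamboo cut at end of day t; sigma 0 unused). *)

Fixpoint height_after (h : nat -> R) (sigma : nat -> nat) (j : nat) (t : nat) : R :=
  match t with
  | O => 0
  | S t' => if Nat.eqb (sigma (S t')) j then 0
            else height_after h sigma j t' + h j
  end.

(** Height of bamboo j at the end of day t >= 1, just before the cut. *)
Definition height_before (h : nat -> R) (sigma : nat -> nat) (j : nat) (t : nat) : R :=
  height_after h sigma j (pred t) + h j.

(** Floor and ceiling (Int_part x = up x - 1 is the floor of x). *)
Definition floorR (x : R) : Z := Int_part x.
Definition ceilR (x : R) : Z := (- Int_part (- x))%Z.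

(** For 0 < x <= 1/2: the integer k >= 1 with 2^{-(k+1)} < x <= 2^{-k},
    i.e. k = floor(-log2 x). *)
Definition kexp (x : R) : nat := Z.to_nat (Int_part (- ln x / ln 2)).
Definition pow2inv (k : nat) : R := / (2 ^ k).

Definition ltb (x y : R) : bool := if Rlt_dec x y then true else false.
Definition leb (x y : R) : bool := if Rle_dec x y then true else false.

Definition inS1 (x : R) : bool := ltb (2/3) x && leb x 1.
Definition inS2 (x : R) : bool := ltb (1/2) x && leb x (2/3).
Definition inS3 (x : R) : bool :=
  leb x (1/2) && ltb (2/3 * pow2inv (kexp x)) x && leb x (pow2inv (kexp x)).
Definition inS4 (x : R) : bool :=
  leb x (1/2) && ltb (pow2inv (S (kexp x))) x && leb x (2/3 * pow2inv (kexp x)).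

(** Modified growth h'' for S3 / S4 members. *)
Definition h3 (x : R) : R := pow2inv (kexp x).
Definition h4 (x : R) : R := 2/3 * pow2inv (kexp x).

Definition idx (n : nat) : list nat := seq 1 n.
Definition S1 (n : nat) (h : nat -> R) := filter (fun j => inS1 (h j)) (idx n).
Definition S2 (n : nat) (h : nat -> R) := filter (fun j => inS2 (h j)) (idx n).
Definition S3 (n : nat) (h : nat -> R) := filter (fun j => inS3 (h j)) (idx n).
Definition S4 (n : nat) (h : nat -> R) := filter (fun j => inS4 (h j)) (idx n).

Definition sumR (l : list R) : R := fold_right Rplus 0 l.

Definition sh3 n h := sumR (map (fun j => h3 (h j)) (S3 n h)).
Definition sh4 n h := sumR (map (fun j => h4 (h j)) (S4 n h)).
Definition pi1 n h : R := INR (length (S1 n h)).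
Definition pi3 n h : R := IZR (floorR (sh3 n h)).
Definition pi4 n h : R := IZR (floorR (sh4 n h)).
Definition f3 n h : R := sh3 n h - pi3 n h.
Definition f4 n h : R := sh4 n h - pi4 n h.

Definition z_a n h : R :=
  pi1 n h + INR (length (S2 n h)) + pi3 n h + pi4 n h
  + IZR (ceilR (f3 n h + f4 n h)).

(** Option (b), only used when S2 is nonempty. *)
Definition hstar n h : R := fold_right Rmax 0 (map h (S2 n h)).
Definition f2 n h : R := if Nat.odd (length (S2 n h)) then 1/2 else 0.
Definition z_b n h : R :=
  2 * hstar n h *
  (pi1 n h + INR (Nat.div (length (S2 n h)) 2) + pi3 n h + pi4 n h
   + IZR (ceilR (f2 n h + f3 n h + f4 n h))).

(** H^{PW''} = min(z(a), z(b)), with z(b) = +infinity when S2 is empty. *)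
Definition H_PW (n : nat) (h : nat -> R) : R :=
  match S2 n h with
  | nil => z_a n h
  | _ :: _ => Rmin (z_a n h) (z_b n h)
  end.

Definition height_bounded_by (n : nat) (h : nat -> R) (sigma : nat -> nat) (B : R) : Prop :=
  forall t j, (1 <= t)%nat -> (1 <= j <= n)%nat -> height_before h sigma j t <= B.

(* Main.v *)
Require Import Defs.
From Stdlib Require Import Reals List Arith ZArith Lra Lia Psatz.
Open Scope R_scope.

Lemma sumR_app l1 l2 : sumR (l1 ++ l2) = sumR l1 + sumR l2.
Proof. induction l1; simpl; [lra| rewrite IHl1; lra]. Qed.

Lemma sum_filter (p : nat -> bool) (f : nat -> R) l :
  sumR (map f (filter p l)) = sumR (map (fun j => if p j then f j else 0) l).
Proof. induction l as [|a l IH]; simpl; [lra|]. destruct (p a); simpl; rewrite IH; lra. Qed.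

Lemma sum_le_in (f g : nat -> R) l :
  (forall x, In x l -> f x <= g x) -> sumR (map f l) <= sumR (map g l).
Proof. induction l as [|a l IH]; simpl; intros H; [lra|].
  assert (f a <= g a) by auto. assert (sumR (map f l) <= sumR (map g l)) by auto. lra. Qed.

Lemma sR_plus (f g : nat -> R) l :
  sumR (map (fun j => f j + g j) l) = sumR (map f l) + sumR (map g l).
Proof. induction l as [|a l IH]; simpl; [lra|]. rewrite IH; lra. Qed.

Lemma sR_scal (c : R) (f : nat -> R) l :
  sumR (map (fun j => c * f j) l) = c * sumR (map f l).
Proof. induction l as [|a l IH]; simpl; [lra|]. rewrite IH; lra. Qed.

Lemma sR_const_sub (c : R) (f : nat -> R) l :
  sumR (map (fun j => f j - c) l) = sumR (map f l) - c * INR (length l).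
Proof. unfold sumR; induction l as [|a l IH]; cbn [map fold_right length]; [simpl; lra| rewrite IH, S_INR; lra]. Qed.

Lemma sR_const (c : R) (l : list nat) :
  sumR (map (fun _ => c) l) = c * INR (length l).
Proof. unfold sumR; induction l as [|a l IH]; cbn [map fold_right length]; [simpl; lra| rewrite IH, S_INR; lra]. Qed.

Lemma sum_ge_elem (f : nat -> R) l k :
  (forall x, In x l -> 0 <= f x) -> In k l -> f k <= sumR (map f l).
Proof. induction l as [|a l IH]; simpl; intros H Hk; [tauto|].
  assert (0 <= sumR (map f l)).
  { clear IH Hk. induction l; simpl; [lra|]. assert (0 <= f a0) by (apply H; simpl; auto).
    assert (0 <= sumR (map f l)) by (apply IHl; intros; apply H; simpl in *; tauto). lra. }
  destruct Hk as [<-|Hk]. lra. assert (0 <= f a) by auto. assert (f k <= sumR (map f l)) by auto. lra. Qed.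

Lemma sum_nonneg (f : nat -> R) l : (forall x, In x l -> 0 <= f x) -> 0 <= sumR (map f l).
Proof. intros H. induction l as [|a l IH]; simpl; [lra|].
  assert (0 <= f a) by (apply H; simpl; auto).
  assert (0 <= sumR (map f l)) by (apply IH; intros; apply H; simpl; auto). lra. Qed.

Lemma sum_pick (f : nat -> R) l k :
  NoDup l -> In k l -> sumR (map (fun j => if Nat.eqb k j then f j else 0) l) = f k.
Proof. induction l as [|a l IH]; simpl; intros Hd Hk; [tauto|].
  inversion Hd; subst.
  destruct Hk as [->|Hk].
  - rewrite Nat.eqb_refl.
    assert (sumR (map (fun j => if Nat.eqb k j then f j else 0) l) = 0) as ->; [|lra].
    clear IH H2. induction l as [|b l IHl]; simpl; [lra|].
    destruct (Nat.eqb k b) eqn:E. apply Nat.eqb_eq in E; subst. simpl in H1; tauto.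
    rewrite IHl; [lra | | simpl in H1; tauto].
    inversion Hd as [|? ? Hn Hd']; inversion Hd'; constructor; [simpl in Hn; tauto | auto].
  - destruct (Nat.eqb k a) eqn:E. apply Nat.eqb_eq in E; subst; tauto.
    rewrite IH; auto; lra. Qed.

Lemma nat_unbounded (r : R) : exists N : nat, r < INR N.
Proof. destruct (archimed r) as [H _].
  destruct (Z_lt_le_dec (up r) 0).
  - exists 0%nat. simpl. apply IZR_lt in l. lra.
  - exists (Z.to_nat (up r)). rewrite INR_IZR_INZ, Z2Nat.id; auto; lra. Qed.

Lemma ceil_lt x : IZR (ceilR x) < x + 1.
Proof. unfold ceilR. destruct (base_Int_part (-x)). rewrite opp_IZR. lra. Qed.

Lemma Int_part_0 : Int_part 0 = 0%Z.
Proof. destruct (base_Int_part 0) as [Ha Hb].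
  assert (Int_part 0 <= 0)%Z by (apply le_IZR; lra).
  assert (-1 < Int_part 0)%Z by (apply lt_IZR; lra). lia. Qed.

Lemma half_div s : INR (Nat.div s 2) + (if Nat.odd s then 1/2 else 0) = INR s / 2.
Proof. pose proof (Nat.div2_odd s) as E. rewrite Nat.div2_div in E.
  destruct (Nat.odd s); cbn [Nat.b2n] in E.
  - rewrite E at 2. rewrite plus_INR, mult_INR. simpl. lra.
  - rewrite E at 2. rewrite plus_INR, mult_INR. simpl. lra. Qed.

Lemma max_list (l : list R) : l <> nil -> (forall x, In x l -> 1/2 < x <= 2/3) ->
  1/2 < fold_right Rmax 0 l <= 2/3 /\
  fold_right Rmax 0 l + (INR (length l) - 1)/2 <= sumR l.
Proof. induction l as [|x l IH]; intros Hne H; [congruence|].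
  assert (Hx : 1/2 < x <= 2/3) by (apply H; simpl; auto).
  destruct l as [|y l].
  - simpl. unfold Rmax. destruct (Rle_dec x 0); simpl; lra.
  - destruct IH as [[Ha Hb] Hc]. discriminate. intros; apply H; simpl in *; tauto.
    change (fold_right Rmax 0 (x :: y :: l)) with (Rmax x (fold_right Rmax 0 (y :: l))).
    change (length (x :: y :: l)) with (S (length (y :: l))). rewrite S_INR.
    change (sumR (x :: y :: l)) with (x + sumR (y :: l)).
    set (M := fold_right Rmax 0 (y :: l)) in *.
    destruct (Rle_dec x M). rewrite Rmax_right by lra; lra. rewrite Rmax_left by lra; lra. Qed.

Lemma sR_minus (f g : nat -> R) l :
  sumR (map (fun j => f j - g j) l) = sumR (map f l) - sumR (map g l).
Proof. induction l as [|a l IH]; simpl; [lra|]. rewrite IH; lra. Qed.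

Lemma sum_ext_in (f g : nat -> R) l : (forall x, In x l -> f x = g x) -> sumR (map f l) = sumR (map g l).
Proof. induction l as [|a l IH]; simpl; intros H; [lra|]. rewrite H, IH; auto. Qed.

Lemma in_idx n j : In j (idx n) <-> (1 <= j <= n)%nat.
Proof. unfold idx. rewrite in_seq. lia. Qed.

Definition Phi h sigma n t := sumR (map (fun j => height_after h sigma j t) (idx n)).

Lemma phi_step h sigma n t : (1 <= sigma (S t) <= n)%nat ->
  Phi h sigma n (S t) = Phi h sigma n t + sumR (map h (idx n))
     - height_before h sigma (sigma (S t)) (S t).
Proof. intros Hs. unfold Phi.
  rewrite (sum_ext_in _ (fun j => (height_after h sigma j t + h j) -
     (if Nat.eqb (sigma (S t)) j then height_before h sigma j (S t) else 0))).
  - rewrite sR_minus, sR_plus, sum_pick; [lra| apply seq_NoDup | apply in_idx; auto].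
  - intros j _. simpl. unfold height_before. simpl.
    destruct (Nat.eqb (sigma (S t)) j); lra.
Qed.

Lemma ha_nonneg h sigma j t : 0 <= h j -> 0 <= height_after h sigma j t.
Proof. intros H. induction t; simpl; [lra|]. destruct (Nat.eqb _ _); lra. Qed.

Lemma avg_bound n h sigma B :
  (forall t, (1 <= t)%nat -> (1 <= sigma t <= n)%nat) ->
  height_bounded_by n h sigma B -> 0 <= B ->
  sumR (map h (idx n)) <= B.
Proof. intros Hs HB HB0.
  set (s := sumR (map h (idx n))).
  assert (Hlow : forall t, INR t * (s - B) <= Phi h sigma n t).
  { induction t.
    - simpl. unfold Phi. rewrite (sum_ext_in _ (fun _ => 0)) by (intros; reflexivity).
      rewrite sR_const. lra.
    - rewrite phi_step by (apply Hs; lia). rewrite S_INR.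
      assert (height_before h sigma (sigma (S t)) (S t) <= B) by (apply HB; [lia| apply Hs; lia]).
      fold s. lra. }
  assert (Hup : forall t, Phi h sigma n t <= B * INR n).
  { intros t. unfold Phi. replace n with (length (idx n)) at 2 by (unfold idx; apply length_seq).
    rewrite <- sR_const. apply sum_le_in. intros j Hj. apply in_idx in Hj.
    destruct t; simpl. lra. destruct (Nat.eqb _ _). lra.
    change (height_after h sigma j t + h j) with (height_before h sigma j (S t)). apply HB; lia. }
  destruct (Rle_dec s B) as [|Hc]; [auto|].
  destruct (nat_unbounded (B * INR n / (s - B))) as [N HN].
  specialize (Hlow N). specialize (Hup N).
  apply Rmult_lt_compat_r with (r := s - B) in HN; [|lra].
  unfold Rdiv in HN. rewrite Rmult_assoc, Rinv_l in HN by lra. lra.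
Qed.

Lemma two_bound n h sigma B :
  (forall t, (1 <= t)%nat -> (1 <= sigma t <= n)%nat) ->
  height_bounded_by n h sigma B -> (2 <= n)%nat -> h 1%nat = 1 -> 0 < h 2%nat ->
  2 <= B.
Proof. intros Hs HB Hn H1 H2.
  destruct (Rle_dec 2 B) as [|Hc]; [auto|exfalso].
  assert (All1 : forall t, (1 <= t)%nat -> sigma t = 1%nat).
  { intros t Ht. destruct (Nat.eq_dec (sigma t) 1) as [|Hne]; auto. exfalso.
    assert (height_before h sigma 1 (S t) <= B) by (apply HB; lia).
    unfold height_before in H. simpl in H. destruct t as [|t]; [lia|].
    simpl in H. replace (Nat.eqb (sigma (S t)) 1) with false in H
      by (symmetry; apply Nat.eqb_neq; auto).
    pose proof (ha_nonneg h sigma 1 t). lra. }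
  assert (Hgrow : forall t, height_after h sigma 2 t = INR t * h 2%nat).
  { induction t. simpl; lra. simpl height_after. rewrite All1 by lia. simpl Nat.eqb.
    cbv iota. rewrite IHt, S_INR. lra. }
  destruct (nat_unbounded (B / h 2%nat)) as [N HN].
  assert (height_before h sigma 2 (S N) <= B) by (apply HB; lia).
  unfold height_before in H. simpl pred in H. rewrite Hgrow in H.
  apply Rmult_lt_compat_r with (r := h 2%nat) in HN; [|lra].
  unfold Rdiv in HN. rewrite Rmult_assoc, Rinv_l in HN by lra. lra.
Qed.

Ltac dec := unfold Defs.ltb, Defs.leb in *; repeat match goal with
  | H : context [Rlt_dec ?a ?b] |- _ => destruct (Rlt_dec a b)
  | H : context [Rle_dec ?a ?b] |- _ => destruct (Rle_dec a b)
  | |- context [Rlt_dec ?a ?b] => destruct (Rlt_dec a b)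
  | |- context [Rle_dec ?a ?b] => destruct (Rle_dec a b)
  end; simpl in *; try discriminate; try lra.

Lemma pow2inv_pos k : 0 < pow2inv k.
Proof. unfold pow2inv. apply Rinv_0_lt_compat, pow_lt. lra. Qed.

Lemma pow2inv_S k : pow2inv (S k) = pow2inv k / 2.
Proof. unfold pow2inv. simpl. rewrite Rinv_mult. unfold Rdiv. lra. Qed.

Lemma class_le x : 0 < x ->
  (if inS1 x then x else 0) + (if inS2 x then x else 0) +
  (if inS3 x then x else 0) + (if inS4 x then x else 0) <= x.
Proof. intros Hx. unfold inS1, inS2, inS3, inS4.
  set (p := pow2inv (kexp x)). set (q := pow2inv (S (kexp x))). dec. Qed.

Lemma S1_prop x : inS1 x = true -> 2/3 < x.
Proof. unfold inS1. dec. Qed.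
Lemma S2_prop x : inS2 x = true -> 1/2 < x <= 2/3.
Proof. unfold inS2. dec. Qed.
Lemma S3_prop x : inS3 x = true -> 0 <= h3 x <= 3/2 * x.
Proof. unfold inS3, h3. pose proof (pow2inv_pos (kexp x)).
  set (p := pow2inv (kexp x)) in *. dec. Qed.
Lemma S4_prop x : inS4 x = true -> 0 <= h4 x <= 3/2 * x.
Proof. unfold inS4, h4. rewrite pow2inv_S. pose proof (pow2inv_pos (kexp x)).
  set (p := pow2inv (kexp x)) in *. dec. Qed.

Lemma key (s1 s2 X hs B Za Zb : R) :
  1 <= s1 -> 1 <= s2 -> 0 <= X -> 1/2 < hs <= 2/3 -> 2 <= B ->
  (2/3)*s1 + 1/3 + hs + (s2-1)/2 + (2/3)*X <= B ->
  Za < s1+s2+X+1 -> Zb < 2*hs*(s1+s2/2+X+1) ->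
  Za <= 32000/16947*B \/ Zb <= 32000/16947*B.
Proof.
intros.
destruct (Rle_dec Za (32000/16947*B)); [left; auto|right].
assert (hs <= 0.6 \/ 0.6 <= hs) as [Hh|Hh] by lra;
[nra|nra].
Qed.

Lemma hpos_all n h : (forall j, (1 <= j < n)%nat -> h (S j) <= h j) -> 0 < h n ->
  forall j, (1 <= j <= n)%nat -> 0 < h j.
Proof. intros Hm Hp. assert (forall d j, (j + d = n)%nat -> (1 <= j)%nat -> h n <= h j).
  { induction d; intros j Hj H1. replace j with n by lia. lra.
    specialize (IHd (S j)). assert (h (S j) <= h j) by (apply Hm; lia).
    assert (h n <= h (S j)) by (apply IHd; lia). lra. }
  intros j Hj. specialize (H (n - j)%nat j). assert (h n <= h j) by (apply H; lia). lra. Qed.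

Theorem corollary1 (n : nat) (h : nat -> R)
  (Hn : (1 <= n)%nat)
  (H1 : h 1%nat = 1)
  (Hmono : forall j, (1 <= j < n)%nat -> h (S j) <= h j)
  (Hpos : 0 < h n)
  (sigma : nat -> nat)
  (Hsigma : forall t, (1 <= t)%nat -> (1 <= sigma t <= n)%nat)
  (B : R) (HB : height_bounded_by n h sigma B) :
  H_PW n h <= 32000 / 16947 * B.
Proof.
  pose proof (hpos_all n h Hmono Hpos) as Hp.
  assert (HB1 : 1 <= B).
  { assert (height_before h sigma 1 1 <= B) by (apply HB; lia). unfold height_before in H. simpl in H. lra. }
  destruct (Nat.eq_dec n 1) as [En|En].
  { subst n. unfold H_PW.
    assert (E2 : S2 1 h = nil). { unfold S2, idx. simpl. rewrite H1. unfold inS2. dec; reflexivity. }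
    rewrite E2. unfold z_a, pi1, pi3, pi4, f3, f4, sh3, sh4.
    assert (E1 : S1 1 h = (1%nat :: nil)). { unfold S1, idx. simpl. rewrite H1. unfold inS1. dec; reflexivity. }
    assert (E3 : S3 1 h = nil). { unfold S3, idx. simpl. rewrite H1. unfold inS3. dec; reflexivity. }
    assert (E4 : S4 1 h = nil). { unfold S4, idx. simpl. rewrite H1. unfold inS4. dec; reflexivity. }
    unfold pi3, pi4, sh3, sh4. rewrite E1, E2, E3, E4. simpl. unfold floorR, ceilR.
    rewrite Int_part_0.
    replace (- (0 - IZR 0 + (0 - IZR 0))) with 0 by (simpl; lra).
    rewrite Int_part_0. simpl. lra. }
  assert (HB2 : 2 <= B) by (apply (two_bound n h sigma); auto; [lia| apply Hp; lia]).
  assert (Havg : sumR (map h (idx n)) <= B) by (apply (avg_bound n h sigma); auto; lra).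
  set (a := sumR (map h (S1 n h))). set (b := sumR (map h (S2 n h))).
  set (c3 := sumR (map h (S3 n h))). set (c4 := sumR (map h (S4 n h))).
  assert (Hpart : a + b + c3 + c4 <= sumR (map h (idx n))).
  { unfold a, b, c3, c4, S1, S2, S3, S4. rewrite !sum_filter, <- !sR_plus.
    apply sum_le_in. intros j Hj. apply in_idx in Hj. apply class_le, Hp; auto. }
  assert (Hsh3 : 0 <= sh3 n h <= 3/2 * c3).
  { unfold sh3, c3. split. apply sum_nonneg. intros j Hj. apply filter_In in Hj.
    apply S3_prop; tauto. rewrite <- sR_scal. apply sum_le_in. intros j Hj.
    apply filter_In in Hj. apply S3_prop; tauto. }
  assert (Hsh4 : 0 <= sh4 n h <= 3/2 * c4).
  { unfold sh4, c4. split. apply sum_nonneg. intros j Hj. apply filter_In in Hj.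
    apply S4_prop; tauto. rewrite <- sR_scal. apply sum_le_in. intros j Hj.
    apply filter_In in Hj. apply S4_prop; tauto. }
  assert (In1 : In 1%nat (S1 n h)).
  { unfold S1. apply filter_In. split. apply in_idx; lia. rewrite H1. unfold inS1. dec. }
  assert (Ha : 2/3 * pi1 n h + 1/3 <= a).
  { unfold pi1, a. pose proof (sR_const_sub (2/3) h (S1 n h)).
    assert (h 1%nat - 2/3 <= sumR (map (fun j => h j - 2/3) (S1 n h))).
    { apply (sum_ge_elem (fun j => h j - 2/3)); auto. intros j Hj. apply filter_In in Hj.
      destruct Hj as [_ Hj]. apply S1_prop in Hj. lra. }
    lra. }
  assert (Hs1 : 1 <= pi1 n h).
  { unfold pi1. destruct (S1 n h). simpl in In1; tauto. simpl length. rewrite S_INR.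
    pose proof (pos_INR (length l)). lra. }
  assert (Hza : z_a n h < pi1 n h + INR (length (S2 n h)) + (sh3 n h + sh4 n h) + 1).
  { unfold z_a. pose proof (ceil_lt (f3 n h + f4 n h)). unfold f3, f4 in *. lra. }
  assert (Hb0 : 0 <= b).
  { unfold b. apply sum_nonneg. intros j Hj. apply filter_In in Hj.
    destruct Hj as [_ Hj]. apply S2_prop in Hj. lra. }
  unfold H_PW.
  destruct (S2 n h) as [|j0 l] eqn:ES2.
  - simpl in Hza. lra.
  - assert (HM := max_list (map h (j0 :: l))).
    destruct HM as [[Hm1 Hm2] Hm3]. discriminate.
    { intros x Hx. apply in_map_iff in Hx. destruct Hx as [j [<- Hj]].
      rewrite <- ES2 in Hj. apply filter_In in Hj. apply S2_prop; tauto. }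
    rewrite length_map in Hm3. fold (sumR (map h (j0 :: l))) in Hm3.
    assert (Hhs : hstar n h = fold_right Rmax 0 (map h (j0 :: l)))
      by (unfold hstar; rewrite ES2; reflexivity).
    assert (Hbb : b = sumR (map h (j0 :: l))) by (unfold b; try rewrite ES2; reflexivity).
    assert (Hzb : z_b n h < 2 * hstar n h *
       (pi1 n h + INR (length (j0 :: l)) / 2 + (sh3 n h + sh4 n h) + 1)).
    { unfold z_b. apply Rmult_lt_compat_l. rewrite Hhs; lra.
      pose proof (ceil_lt (f2 n h + f3 n h + f4 n h)). pose proof (half_div (length (S2 n h))).
      unfold f2, f3, f4 in *. rewrite ES2 in *. lra. }
    assert (Hlen : 1 <= INR (length (j0 :: l))).
    { simpl length. rewrite S_INR. pose proof (pos_INR (length l)). lra. }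
    rewrite <- Hhs in *.
    destruct (key (pi1 n h) (INR (length (j0 :: l))) (sh3 n h + sh4 n h) (hstar n h) B
      (z_a n h) (z_b n h)) as [K|K]; try lra.
    + apply Rle_trans with (z_a n h); [apply Rmin_l| auto].
    + apply Rle_trans with (z_b n h); [apply Rmin_r| auto].
Qed.
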